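(* Let $X\neq\emptyset$ be a set, $\Phi$ a nonempty set of bounded functions $X\to\mathbb{R}$ that is compact with respect to $D_\Phi$, and $G$ a subgroup of $\mathrm{Homeo}_\Phi(X)$. If $G$ is complete with respect to the pseudo-metric $D_G$, then $G$ is compact with respect to $D_G$.
   Context: $D_\Phi(\varphi_1,\varphi_2):=\|\varphi_1-\varphi_2\|_\infty$. $D_X(x_1,x_2):=\sup_{\varphi\in\Phi}|\varphi(x_1)-\varphi(x_2)|$. $\mathrm{Homeo}_\Phi(X)$ is the group of bijections $g:X\to X$ that are homeomorphisms for the topology of $D_X$ and satisfy $\varphi\circ g\in\Phi$ and $\varphi\circ g^{-1}\in\Phi$ for all $\varphi\in\Phi$. For $g_1,g_2\in G$, $D_G(g_1,g_2):=\sup_{\varphi\in\Phi}D_\Phi(\varphi\circ g_1,\varphi\circ g_2)$. *)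

(* Defs.v *)
From Stdlib Require Import Reals List.
Open Scope R_scope.

(* Extended-valued distances given by suprema are encoded through the
   predicate "D a b < r": [dlt a b r]. For a supremum s = sup_i v_i
   (possibly +infinity), "s < r" holds iff there is r' < r bounding all v_i. *)

Definition sup_lt {I : Type} (P : I -> Prop) (v : I -> R) (r : R) : Prop :=
  exists r', r' < r /\ forall i, P i -> v i <= r'.

Definition DPhi_lt {X : Type} (f1 f2 : X -> R) (r : R) : Prop :=
  sup_lt (fun _ : X => True) (fun x => Rabs (f1 x - f2 x)) r.

Definition DX_lt {X : Type} (Phi : (X -> R) -> Prop) (x1 x2 : X) (r : R) : Prop :=
  sup_lt Phi (fun phi => Rabs (phi x1 - phi x2)) r.

(* D_G(g1,g2) = sup_{phi in Phi} D_Phi(phi o g1, phi o g2) *)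
Definition DG_lt {X : Type} (Phi : (X -> R) -> Prop) (g1 g2 : X -> X) (r : R) : Prop :=
  sup_lt (fun p : (X -> R) * X => Phi (fst p))
         (fun p => Rabs (fst p (g1 (snd p)) - fst p (g2 (snd p)))) r.

Definition is_open {T : Type} (dlt : T -> T -> R -> Prop) (U : T -> Prop) : Prop :=
  forall a, U a -> exists r, 0 < r /\ forall b, dlt a b r -> U b.

Definition rel_open {T : Type} (dlt : T -> T -> R -> Prop) (S U : T -> Prop) : Prop :=
  forall a, S a -> U a -> exists r, 0 < r /\ forall b, S b -> dlt a b r -> U b.

Definition compact_set {T : Type} (dlt : T -> T -> R -> Prop) (S : T -> Prop) : Prop :=
  forall (I : Type) (U : I -> T -> Prop),
    (forall i, rel_open dlt S (U i)) ->
    (forall a, S a -> exists i, U i a) ->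
    exists l : list I, forall a, S a -> exists i, In i l /\ U i a.

Definition cauchy_seq {T : Type} (dlt : T -> T -> R -> Prop) (u : nat -> T) : Prop :=
  forall eps, 0 < eps -> exists N, forall m n, (N <= m)%nat -> (N <= n)%nat ->
    dlt (u m) (u n) eps.

Definition seq_conv {T : Type} (dlt : T -> T -> R -> Prop) (u : nat -> T) (l : T) : Prop :=
  forall eps, 0 < eps -> exists N, forall n, (N <= n)%nat -> dlt (u n) l eps.

Definition complete_set {T : Type} (dlt : T -> T -> R -> Prop) (S : T -> Prop) : Prop :=
  forall u : nat -> T, (forall n, S (u n)) -> cauchy_seq dlt u ->
    exists l, S l /\ seq_conv dlt u l.

Definition bounded_fun {X : Type} (f : X -> R) : Prop :=
  exists M, forall x, Rabs (f x) <= M.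

Definition continuous_map {A B : Type} (dA : A -> A -> R -> Prop)
  (dB : B -> B -> R -> Prop) (f : A -> B) : Prop :=
  forall U : B -> Prop, is_open dB U -> is_open dA (fun a => U (f a)).

Definition homeo_Phi {X : Type} (Phi : (X -> R) -> Prop) (g : X -> X) : Prop :=
  exists h : X -> X,
    (forall x, h (g x) = x) /\ (forall x, g (h x) = x) /\
    continuous_map (DX_lt Phi) (DX_lt Phi) g /\
    continuous_map (DX_lt Phi) (DX_lt Phi) h /\
    (forall phi, Phi phi -> Phi (fun x => phi (g x)) /\ Phi (fun x => phi (h x))).

Definition subgroup_Homeo {X : Type} (Phi : (X -> R) -> Prop) (G : (X -> X) -> Prop) : Prop :=
  (forall g, G g -> homeo_Phi Phi g) /\
  G (fun x => x) /\
  (forall g1 g2, G g1 -> G g2 -> G (fun x => g1 (g2 x))) /\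
  (forall g, G g -> exists h, G h /\ (forall x, h (g x) = x) /\ (forall x, g (h x) = x)).

(* Main.v *)
Require Import Defs.
From Stdlib Require Import Reals List.
From Stdlib Require Import ZArith Lra Lia ClassicalEpsilon Classical.
Open Scope R_scope.

Lemma arch (t : R) : exists k : nat, t < INR k.
Proof.
  destruct (archimed t) as [H _].
  destruct (Z_le_gt_dec (up t) 0) as [h|h].
  - exists 0%nat; simpl. apply IZR_le in h. lra.
  - exists (Z.to_nat (up t)). rewrite INR_IZR_INZ, Z2Nat.id by lia. lra.
Qed.

Lemma list_collect {A B : Type} (N : list A) (Q : A -> list B -> Prop) :
  (forall a, In a N -> exists l, Q a l) ->
  exists lg : list B,
    (forall a, In a N -> exists l, Q a l /\ (forall c, In c l -> In c lg)) /\
    (forall c, In c lg -> exists a l, In a N /\ Q a l /\ In c l).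
Proof.
  induction N as [|a N IH]; intros H.
  - exists nil. split; [intros a []| intros c []].
  - destruct (H a (or_introl eq_refl)) as [l Hl].
    destruct IH as [lg [H1 H2]]. { intros b Hb; apply H; now right. }
    exists (l ++ lg). split.
    + intros b [<-|Hb].
      * exists l; split; auto. intros c Hc; apply in_app_iff; now left.
      * destruct (H1 b Hb) as [l' [Q' I']]. exists l'; split; auto.
        intros c Hc; apply in_app_iff; right; auto.
    + intros c Hc. apply in_app_iff in Hc as [Hc|Hc].
      * exists a, l; split; [now left| auto].
      * destruct (H2 c Hc) as [b [l' [Hb [Q' I']]]]. exists b, l'; split; [now right|auto].
Qed.

Section Gen.
Variable T : Type.
Variable dlt : T -> T -> R -> Prop.
Hypothesis tri : forall a b c r s, dlt a b r -> dlt b c s -> dlt a c (r + s).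
Hypothesis sym : forall a b r, dlt a b r -> dlt b a r.
Hypothesis mono : forall a b r s, dlt a b r -> r <= s -> dlt a b s.

Lemma gen_compact (G : T -> Prop) (inh : inhabited T) :
  (forall eps, 0 < eps -> exists lg, (forall c, In c lg -> G c) /\
        forall g, G g -> exists c, In c lg /\ dlt c g eps) ->
  complete_set dlt G -> compact_set dlt G.
Proof.
  intros Hnet Hcomp I U Hopen Hcov.
  apply NNPP; intro H0.
  set (NF := fun S : T -> Prop =>
        ~ exists l : list I, forall a, S a -> exists i, In i l /\ U i a).
  set (e := fun k : nat => / (INR k + 1)).
  assert (epos : forall k, 0 < e k).
  { intro k; unfold e; apply Rinv_0_lt_compat; pose proof (pos_INR k); lra. }
  assert (step : forall S : T -> Prop, (forall g, S g -> G g) -> NF S -> forall k,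
            exists c, NF (fun g => S g /\ dlt c g (e k))).
  { intros S SG HS k. destruct (Hnet (e k) (epos k)) as [lg [_ Hlg]].
    apply NNPP; intro Hn. apply HS.
    destruct (list_collect lg (fun c l => forall a, (S a /\ dlt c a (e k)) ->
                    exists i, In i l /\ U i a)) as [L [HL1 _]].
    { intros c _. apply NNPP; intro Hc. apply Hn. exists c. exact Hc. }
    exists L. intros a Ha. destruct (Hlg a (SG a Ha)) as [c [Hc Hca]].
    destruct (HL1 c Hc) as [l [Ql Il]]. destruct (Ql a (conj Ha Hca)) as [i [Hi Ui]].
    exists i; auto. }
  set (cen := fun (S : T -> Prop) k =>
          epsilon inh (fun c => NF (fun g => S g /\ dlt c g (e k)))).
  set (Sk := fix Sk (k : nat) : T -> Prop :=
          match k with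
          | O => G
          | S k' => fun g => Sk k' g /\ dlt (cen (Sk k') k') g (e k')
          end).
  assert (HS : forall k, NF (Sk k) /\ (forall g, Sk k g -> G g)).
  { induction k as [|k [IH1 IH2]].
    - split; [exact H0| auto].
    - split.
      + simpl. unfold cen. apply epsilon_spec. apply step; auto.
      + intros g [Hg _]; auto. }
  assert (Hne : forall k, exists a, Sk k a).
  { intro k. apply NNPP; intro Hn. apply (proj1 (HS k)). exists nil.
    intros a Ha; exfalso; apply Hn; eauto. }
  set (u := fun k => epsilon inh (Sk k)).
  assert (Hu : forall k, Sk k (u k)).
  { intro k. apply epsilon_spec, Hne. }
  assert (Hmono : forall k m, (k <= m)%nat -> forall g, Sk m g -> Sk k g).
  { intros k m Hkm; induction Hkm; auto. intros g Hg; apply IHHkm; now destruct Hg. }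
  assert (Hball : forall k g, Sk (S k) g -> dlt (cen (Sk k) k) g (e k)).
  { intros k g [_ Hg]; exact Hg. }
  assert (small : forall eps, 0 < eps -> exists k, 3 * e k < eps).
  { intros eps Heps. destruct (arch (3 / eps)) as [k Hk]. exists k.
    unfold e. pose proof (pos_INR k).
    apply (Rmult_lt_reg_r (INR k + 1)); [lra|].
    rewrite Rmult_assoc, Rinv_l by lra.
    apply (Rmult_lt_reg_r (/ eps)); [apply Rinv_0_lt_compat; lra|].
    replace (eps * (INR k + 1) * / eps) with (INR k + 1) by (field; lra).
    unfold Rdiv in Hk. lra. }
  destruct (Hcomp u) as [l [Gl Hl]].
  - intro n. apply (proj2 (HS n)), Hu.
  - intros eps Heps. destruct (small eps Heps) as [k Hk]. exists (S k).
    intros m n Hm Hn.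
    pose proof (Hball k _ (Hmono _ _ Hm _ (Hu m))) as A.
    pose proof (Hball k _ (Hmono _ _ Hn _ (Hu n))) as B.
    apply (mono _ _ (e k + e k)). { apply tri with (cen (Sk k) k); auto. }
    pose proof (epos k); lra.
  - destruct (Hcov l Gl) as [i Hi].
    destruct (Hopen i l Gl Hi) as [r [Hr Hrb]].
    destruct (small r Hr) as [k Hk].
    destruct (Hl (e k) (epos k)) as [N HN].
    apply (proj1 (HS (S k))). exists (i :: nil).
    intros g Hg. exists i; split; [now left|].
    apply Hrb. { apply (proj2 (HS (S k))), Hg. }
    set (n := Nat.max N (S k)).
    assert (A : dlt (u n) l (e k)) by (apply HN; unfold n; lia).
    assert (B : dlt (cen (Sk k) k) (u n) (e k)).
    { apply Hball, (Hmono _ n); [unfold n; lia| apply Hu]. }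
    assert (C := Hball k g Hg).
    apply (mono _ _ (e k + e k + e k)); [|lra].
    apply tri with (cen (Sk k) k); auto.
    apply tri with (u n); auto.
Qed.
End Gen.

Lemma DG_tri {X} (Phi : (X -> R) -> Prop) a b c r s :
  DG_lt Phi a b r -> DG_lt Phi b c s -> DG_lt Phi a c (r + s).
Proof.
  intros [r1 [H1 K1]] [s1 [H2 K2]]. exists (r1 + s1); split; [lra|].
  intros p Hp. specialize (K1 p Hp); specialize (K2 p Hp).
  eapply Rle_trans; [|apply Rplus_le_compat; eauto].
  replace (fst p (a (snd p)) - fst p (c (snd p))) with
    ((fst p (a (snd p)) - fst p (b (snd p))) + (fst p (b (snd p)) - fst p (c (snd p)))) by ring.
  apply Rabs_triang.
Qed.

Lemma DG_sym {X} (Phi : (X -> R) -> Prop) a b r :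
  DG_lt Phi a b r -> DG_lt Phi b a r.
Proof.
  intros [r1 [H1 K1]]. exists r1; split; auto. intros p Hp.
  rewrite Rabs_minus_sym; auto.
Qed.

Lemma DG_mono {X} (Phi : (X -> R) -> Prop) a b r s :
  DG_lt Phi a b r -> r <= s -> DG_lt Phi a b s.
Proof. intros [r1 [H1 K1]] H. exists r1; split; auto; lra. Qed.

Lemma DPhi_tri {X} (a b c : X -> R) r s :
  DPhi_lt a b r -> DPhi_lt b c s -> DPhi_lt a c (r + s).
Proof.
  intros [r1 [H1 K1]] [s1 [H2 K2]]. exists (r1 + s1); split; [lra|].
  intros x _. specialize (K1 x I); specialize (K2 x I).
  replace (a x - c x) with ((a x - b x) + (b x - c x)) by ring.
  eapply Rle_trans; [apply Rabs_triang|lra].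
Qed.

Lemma DPhi_open {X} (a b : X -> R) r :
  DPhi_lt a b r -> exists r1, r1 < r /\ DPhi_lt a b r1.
Proof.
  intros [r0 [H K]]. exists ((r0 + r) / 2). split; [lra|].
  exists r0; split; [lra|auto].
Qed.

Lemma Phi_net {X} (Phi : (X -> R) -> Prop) d :
  0 < d -> compact_set DPhi_lt Phi ->
  exists N : list (X -> R),
    forall psi, Phi psi -> exists nu, In nu N /\ Phi nu /\ forall x, Rabs (nu x - psi x) <= d.
Proof.
  intros Hd Hc.
  destruct (Hc (X -> R) (fun psi a => Phi psi /\ DPhi_lt psi a d)) as [l Hl].
  - intros psi a Ha [Hpsi Hpa]. destruct (DPhi_open _ _ _ Hpa) as [r1 [Hr1 H1]].
    exists (d - r1); split; [lra|]. intros b _ Hb. split; auto.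
    replace d with (r1 + (d - r1)) by ring. eapply DPhi_tri; eauto.
  - intros a Ha. exists a. split; auto. exists 0; split; auto.
    intros x _. rewrite Rminus_diag, Rabs_R0; lra.
  - exists l. intros psi Hpsi. destruct (Hl psi Hpsi) as [nu [Hin [Hnu [r0 [Hr0 K]]]]].
    exists nu; repeat split; auto. intro x. specialize (K x I). lra.
Qed.

Lemma cells {X} (Phi : (X -> R) -> Prop) (N : list (X -> R)) d :
  (forall psi, Phi psi -> exists nu, In nu N /\ Phi nu /\ forall x, Rabs (nu x - psi x) <= d) ->
  forall L : list (X -> R), forall S : (X -> X) -> Prop,
  (forall g phi, S g -> Phi phi -> Phi (fun x => phi (g x))) ->
  exists lg, (forall c, In c lg -> S c) /\
    forall g, S g -> exists c, In c lg /\
      forall phi, In phi L -> Phi phi -> forall x, Rabs (phi (c x) - phi (g x)) <= 2 * d.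
Proof.
  intros Hnet L. induction L as [|phi L IH]; intros S HS.
  - destruct (classic (exists g, S g)) as [[g0 Hg0]|Hn].
    + exists (g0 :: nil). split. { intros c [<-|[]]; auto. }
      intros g Hg. exists g0. split; [now left|]. intros _ [].
    + exists nil. split; [intros c []|]. intros g Hg; exfalso; eauto.
  - destruct (classic (Phi phi)) as [Hphi|Hphi].
    + destruct (list_collect N (fun nu lg =>
         (forall c, In c lg -> S c /\ forall x, Rabs (nu x - phi (c x)) <= d) /\
         forall g, (S g /\ forall x, Rabs (nu x - phi (g x)) <= d) -> exists c, In c lg /\
          forall phi, In phi L -> Phi phi -> forall x, Rabs (phi (c x) - phi (g x)) <= 2 * d))
        as [lg [H1 H2]].
      { intros nu _. apply IH. intros g ph [Hg _]; auto. }
      exists lg. split.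
      * intros c Hc. destruct (H2 c Hc) as [nu [l [_ [[Q _] Il]]]]. apply (Q c Il).
      * intros g Hg. destruct (Hnet _ (HS g phi Hg Hphi)) as [nu [Hin [_ Hnu]]].
        destruct (H1 nu Hin) as [l [[Q1 Q2] Il]].
        destruct (Q2 g (conj Hg Hnu)) as [c [Hc Hcl]].
        exists c. split; auto.
        intros ph [<-|Hph] Hp x.
        -- destruct (Q1 c Hc) as [_ Hc2]. specialize (Hc2 x). specialize (Hnu x).
           simpl in Hnu.
           replace (phi (c x) - phi (g x)) with (- (nu x - phi (c x)) + (nu x - phi (g x))) by ring.
           eapply Rle_trans; [apply Rabs_triang|]. rewrite Rabs_Ropp. lra.
        -- apply Hcl; auto.
    + destruct (IH S HS) as [lg [H1 H2]]. exists lg. split; auto.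
      intros g Hg. destruct (H2 g Hg) as [c [Hc Hcl]]. exists c. split; auto.
      intros ph [<-|Hph] Hp; [contradiction|]. auto.
Qed.

Theorem mainTheorem6 (X : Type) (Phi : (X -> R) -> Prop) (G : (X -> X) -> Prop) :
  (exists x : X, True) ->
  (exists phi, Phi phi) ->
  (forall phi, Phi phi -> bounded_fun phi) ->
  compact_set DPhi_lt Phi ->
  subgroup_Homeo Phi G ->
  complete_set (DG_lt Phi) G ->
  compact_set (DG_lt Phi) G.
Proof.
  intros _ _ _ HcPhi [Hhom [Hid _]] Hcomp.
  assert (HG : forall g phi, G g -> Phi phi -> Phi (fun x => phi (g x))).
  { intros g phi Hg Hphi. destruct (Hhom g Hg) as [h [_ [_ [_ [_ K]]]]]. apply K; auto. }
  apply gen_compact.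
  - apply DG_tri.
  - apply DG_sym.
  - apply DG_mono.
  - exact (inhabits (fun x => x)).
  - intros eps Heps. set (d := eps / 5).
    destruct (Phi_net Phi d) as [N HN]; [unfold d; lra|auto|].
    destruct (cells Phi N d HN N G HG) as [lg [H1 H2]].
    exists lg. split; auto. intros g Hg. destruct (H2 g Hg) as [c [Hc Hcl]].
    exists c. split; auto. exists (4 * d). split; [unfold d; lra|].
    intros [phi x] Hp; simpl in *.
    destruct (HN phi Hp) as [nu [Hin [Hnu Hclose]]].
    pose proof (Hcl nu Hin Hnu x) as A.
    pose proof (Hclose (c x)) as B. pose proof (Hclose (g x)) as C.
    replace (phi (c x) - phi (g x)) with
      (- (nu (c x) - phi (c x)) + (nu (c x) - nu (g x)) + (nu (g x) - phi (g x))) by ring.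
    eapply Rle_trans; [apply Rabs_triang|].
    eapply Rle_trans; [apply Rplus_le_compat_r, Rabs_triang|].
    rewrite Rabs_Ropp. lra.
  - exact Hcomp.
Qed.
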